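(* Let $G$ be a finite abelian group and let $M$ be a finite inverse $\hat G$-linear monoid of dimension $n$. Then there exists an injective monoid homomorphism $\phi_M:M\to\mathrm{End}_{\hat G}(M)\cong I_n(\hat G)$ such that $\phi_M(x^* )=\phi_M(x)^*$ and $\phi_M(gx)=g\phi_M(x)$ for all $x\in M$ and $g\in G$.
   Context: $\hat G=G\sqcup\{0\}$ with $0$ absorbing. $\mathrm{Vect}_{\hat G}$: objects are finite pointed sets with an action of $\hat G$ ($0v=0$, $g0=0$) such that $G$ acts freely on nonzero elements; morphisms $f$ satisfy $f(0)=0$, $f(gv)=gf(v)$, $f(v_1)=f(v_2)\neq0\Rightarrow Gv_1=Gv_2$. A $\hat G$-linear monoid is a finite monoid $M$ with absorbing element $0_M$ containing $G$ as a subgroup of units commuting with all of $M$, with $G$ acting freely by translation on $M\setminus\{0_M\}$; thus $M$ is an object of $\mathrm{Vect}_{\hat G}$, its dimension is the number of $G$-orbits in $M\setminus\{0_M\}$, and $\mathrm{End}_{\hat G}(M)$ is its endomorphism monoid in $\mathrm{Vect}_{\hat G}$, with $g\phi$ denoting the composite of $\phi$ with scalar multiplication by $g$. $I_n(\hat G)$ is the monoid of $n\times n$ matrices with entries in $\hat G$ having at most one nonzero entry in each row and column, under matrix multiplication; it is an inverse monoid and isomorphic to $\mathrm{End}_{\hat G}(\hat G^{\oplus n})$. A monoid is inverse if each $x$ has a unique $x^*$ with $xx^*x=x$ and $x^*xx^*=x^*$ (its $*$-inverse). *)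

(* Defs.v *)
From mathcomp Require Import all_boot all_order all_algebra all_fingroup.
Set Implicit Arguments. Unset Strict Implicit. Unset Printing Implicit Defensive.

Local Open Scope group_scope.

Definition is_Ghat_linear_monoid (G : finGroupType) (T : finType)
  (mul : T -> T -> T) (one zero : T) (iota : G -> T) : Prop :=
  associative mul /\ left_id one mul /\ right_id one mul /\
  (forall x, mul zero x = zero /\ mul x zero = zero) /\
  (* G is a subgroup of the units (injective monoid map, hence into units) *)
  injective iota /\ iota 1 = one /\
  (forall g h : G, iota (g * h) = mul (iota g) (iota h)) /\
  (forall (g : G) x, mul (iota g) x = mul x (iota g)) /\
  (forall (g : G) x, x != zero -> mul (iota g) x = x -> g = 1).

Definition is_star_inv (T : Type) (mul : T -> T -> T) (x y : T) : Prop :=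
  mul (mul x y) x = x /\ mul (mul y x) y = y.

Definition is_inverse_monoid (T : Type) (mul : T -> T -> T) : Prop :=
  forall x, exists! y, is_star_inv mul x y.

Definition Gorbit (G : finGroupType) (T : finType) (mul : T -> T -> T)
  (iota : G -> T) (x : T) : {set T} :=
  [set mul (iota g) x | g : G].

Definition Ghat_dim (G : finGroupType) (T : finType) (mul : T -> T -> T)
  (zero : T) (iota : G -> T) : nat :=
  #|[set Gorbit mul iota x | x in [set x | x != zero]]|.

(* None plays the role of 0 in Ĝ. *)
Definition is_rook (G : finGroupType) (n : nat) (A : 'M[option G]_n) : bool :=
  [forall i, forall j1, forall j2,
     (A i j1 != None) && (A i j2 != None) ==> (j1 == j2)] &&
  [forall j, forall i1, forall i2,
     (A i1 j != None) && (A i2 j != None) ==> (i1 == i2)].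

(* matrix product in Ĝ: each (i,j) entry has at most one nonzero summand *)
Definition rook_mul (G : finGroupType) (n : nat) (A B : 'M[option G]_n)
  : 'M[option G]_n :=
  \matrix_(i, j)
    if [pick k | (A i k != None) && (B k j != None)] is Some k then
      match A i k, B k j with
      | Some a, Some b => Some (a * b)
      | _, _ => None
      end
    else None.

Definition rook_one (G : finGroupType) (n : nat) : 'M[option G]_n :=
  \matrix_(i, j) if i == j then Some 1 else None.

Definition rook_scale (G : finGroupType) (n : nat) (g : G)
  (A : 'M[option G]_n) : 'M[option G]_n :=
  \matrix_(i, j) omap (fun a => g * a) (A i j).

(* Main.v *)
Require Import Defs.
From mathcomp Require Import all_boot all_order all_algebra all_fingroup.
Set Implicit Arguments. Unset Strict Implicit. Unset Printing Implicit Defensive.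
Local Open Scope group_scope.

Section Inv.
Variables (G : finGroupType) (T : finType) (mul : T -> T -> T) (one zero : T) (iota : G -> T).
Local Notation "x ⊙ y" := (mul x y) (at level 40, left associativity).
Hypotheses (mulA : forall x y z, x ⊙ (y ⊙ z) = x ⊙ y ⊙ z)
  (mul1x : forall x, one ⊙ x = x) (mulx1 : forall x, x ⊙ one = x)
  (mul0x : forall x, zero ⊙ x = zero) (mulx0 : forall x, x ⊙ zero = zero)
  (iota1 : iota 1 = one) (iotaM : forall g h, iota (g * h) = iota g ⊙ iota h)
  (iotaC : forall g x, iota g ⊙ x = x ⊙ iota g)
  (free : forall g x, x != zero -> iota g ⊙ x = x -> g = 1)
  (abel : forall g h : G, g * h = h * g)
  (inv : is_inverse_monoid mul).

Definition star x := odflt x [pick y | (x ⊙ y ⊙ x == x) && (y ⊙ x ⊙ y == y)].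

Lemma starP x : is_star_inv mul x (star x).
Proof.
rewrite /star; case: pickP => [y /andP [/eqP H1 /eqP H2] | H] //=.
case: (inv x) => y [[H1 H2] _].
by move: (H y); rewrite H1 H2 !eqxx.
Qed.

Lemma star_uniq x y : is_star_inv mul x y -> y = star x.
Proof.
move=> Hy; case: (inv x) => z [_ Hz].
by rewrite -(Hz _ Hy) -(Hz _ (starP x)).
Qed.

Lemma star1 x : x ⊙ star x ⊙ x = x. Proof. by case: (starP x). Qed.
Lemma star2 x : star x ⊙ x ⊙ star x = star x. Proof. by case: (starP x). Qed.

Lemma star_idem e : e ⊙ e = e -> star e = e.
Proof. by move=> He; apply/esym/star_uniq; split; rewrite He. Qed.

Lemma idem_prod e f : e ⊙ e = e -> f ⊙ f = f -> e ⊙ f ⊙ (e ⊙ f) = e ⊙ f.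
Proof.
move=> He Hf.
set a := star (e ⊙ f).
have Ha1 : e ⊙ f ⊙ a ⊙ (e ⊙ f) = e ⊙ f by apply: star1.
have Ha2 : a ⊙ (e ⊙ f) ⊙ a = a by apply: star2.
have Hfae : f ⊙ a ⊙ e = a.
  apply: star_uniq; split.
    transitivity (e ⊙ (f ⊙ f) ⊙ a ⊙ (e ⊙ e) ⊙ f); first by rewrite !mulA.
    by rewrite He Hf -[RHS]Ha1 !mulA.
  transitivity (f ⊙ (a ⊙ (e ⊙ f) ⊙ a) ⊙ e); last by rewrite Ha2.
  transitivity (f ⊙ a ⊙ (e ⊙ e) ⊙ (f ⊙ f) ⊙ a ⊙ e); first by rewrite !mulA.
  by rewrite He Hf !mulA.
have Haa : a ⊙ a = a.
  have : (f ⊙ a ⊙ e) ⊙ (f ⊙ a ⊙ e) = f ⊙ a ⊙ e.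
    transitivity (f ⊙ (a ⊙ (e ⊙ f) ⊙ a) ⊙ e); first by rewrite !mulA.
    by rewrite Ha2.
  by rewrite Hfae.
have Hsa : star a = a by apply: star_idem.
have : e ⊙ f = star a by apply: star_uniq; split.
by rewrite Hsa => ->.
Qed.

Lemma idem_comm e f : e ⊙ e = e -> f ⊙ f = f -> e ⊙ f = f ⊙ e.
Proof.
move=> He Hf.
have Hef := idem_prod He Hf.
have Hfe := idem_prod Hf He.
apply/esym; rewrite -(star_idem Hef); apply: star_uniq; split.
  transitivity (e ⊙ (f ⊙ f) ⊙ (e ⊙ e) ⊙ f); first by rewrite !mulA.
  by rewrite He Hf -mulA Hef.
transitivity (f ⊙ (e ⊙ e) ⊙ (f ⊙ f) ⊙ e); first by rewrite !mulA.
by rewrite He Hf -mulA Hfe.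
Qed.

Definition s x := star x ⊙ x.
Lemma s_idem x : s x ⊙ s x = s x.
Proof. by rewrite /s mulA star2. Qed.
Lemma r_idem x : x ⊙ star x ⊙ (x ⊙ star x) = x ⊙ star x.
Proof. by rewrite mulA star1. Qed.

Lemma star_mul x y : star (x ⊙ y) = star y ⊙ star x.
Proof.
apply/esym/star_uniq; split.
  transitivity (x ⊙ ((y ⊙ star y) ⊙ (star x ⊙ x)) ⊙ y); first by rewrite !mulA.
  rewrite (idem_comm (r_idem y) (s_idem x)).
  transitivity ((x ⊙ star x ⊙ x) ⊙ (y ⊙ star y ⊙ y)); first by rewrite !mulA.
  by rewrite !star1.
transitivity (star y ⊙ ((star x ⊙ x) ⊙ (y ⊙ star y)) ⊙ star x); first by rewrite !mulA.
rewrite -(idem_comm (r_idem y) (s_idem x)).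
transitivity ((star y ⊙ y ⊙ star y) ⊙ (star x ⊙ x ⊙ star x)); first by rewrite !mulA.
by rewrite !star2.
Qed.


Definition L x y := if s x ⊙ y == y then x ⊙ y else zero.

Lemma iotaMM g h y : iota g ⊙ (iota h ⊙ y) = iota (g * h) ⊙ y.
Proof. by rewrite iotaM mulA. Qed.
Lemma iotaK g y : iota g^-1 ⊙ (iota g ⊙ y) = y.
Proof. by rewrite iotaMM mulVg iota1 mul1x. Qed.
Lemma iotaKV g y : iota g ⊙ (iota g^-1 ⊙ y) = y.
Proof. by rewrite iotaMM mulgV iota1 mul1x. Qed.
Lemma iota_inj2 g y z : iota g ⊙ y = iota g ⊙ z -> y = z.
Proof. by move/(congr1 (mul (iota g^-1))); rewrite !iotaK. Qed.
Lemma iota_zero g y : iota g ⊙ y = zero -> y = zero.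
Proof. by move=> H; rewrite -(iotaK g y) H mulx0. Qed.
Lemma iota_freeq a b y : y != zero -> iota a ⊙ y = iota b ⊙ y -> a = b.
Proof.
move=> nz H.
have : iota (b^-1 * a) ⊙ y = y by rewrite -iotaMM H iotaK.
by move/(free nz) => E; rewrite -(mulKVg b a) E mulg1.
Qed.
Lemma iota_mid x g y : x ⊙ (iota g ⊙ y) = iota g ⊙ (x ⊙ y).
Proof. by rewrite mulA -iotaC -mulA. Qed.
Lemma iota_mul2 g h a b : (iota g ⊙ a) ⊙ (iota h ⊙ b) = iota (g * h) ⊙ (a ⊙ b).
Proof. by rewrite -mulA iota_mid iotaMM. Qed.
Lemma star_iota g x : star (iota g ⊙ x) = iota g^-1 ⊙ star x.
Proof.
apply/esym/star_uniq; split.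
  by rewrite !iota_mul2 mulgV mul1g star1.
by rewrite !iota_mul2 mulVg mul1g star2.
Qed.
Lemma s_iota g x : s (iota g ⊙ x) = s x.
Proof. by rewrite /s star_iota iota_mul2 mulVg iota1 mul1x. Qed.

Lemma L_zero x : L x zero = zero.
Proof. by rewrite /L mulx0 eqxx mulx0. Qed.

Lemma L_iota x g y : L x (iota g ⊙ y) = iota g ⊙ L x y.
Proof.
rewrite /L iota_mid; have [E|E] := eqVneq (s x ⊙ y) y.
  by rewrite E eqxx iota_mid.
rewrite mulx0; case: eqP => // /iota_inj2 E'.
by rewrite E' eqxx in E.
Qed.

Lemma L_inj x y1 y2 : L x y1 = L x y2 -> L x y1 != zero -> y1 = y2.
Proof.
rewrite /L; case: eqP => E1; case: eqP => E2 H; rewrite ?H ?eqxx //; move=> _.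
by rewrite -E1 -E2 /s -!mulA H.
Qed.

Lemma L_mul x y z : L (x ⊙ y) z = L x (L y z).
Proof.
have Hs : s (x ⊙ y) = star y ⊙ s x ⊙ y by rewrite /s star_mul !mulA.
have c3c1 : s (x ⊙ y) ⊙ z = z -> s y ⊙ z = z.
  rewrite Hs => H.
  transitivity (s y ⊙ (star y ⊙ s x ⊙ y ⊙ z)); first by rewrite H.
  rewrite /s !mulA star2.
  by rewrite -[RHS]H /s !mulA.
have c3c2 : s (x ⊙ y) ⊙ z = z -> s x ⊙ (y ⊙ z) = y ⊙ z.
  rewrite Hs => H.
  transitivity (s x ⊙ (y ⊙ (star y ⊙ s x ⊙ y ⊙ z))); first by rewrite H.
  transitivity ((s x ⊙ (y ⊙ star y)) ⊙ s x ⊙ y ⊙ z); first by rewrite !mulA.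
  rewrite -(idem_comm (r_idem y) (s_idem x)).
  transitivity (y ⊙ star y ⊙ (s x ⊙ s x) ⊙ y ⊙ z); first by rewrite !mulA.
  by rewrite s_idem -[in RHS]H !mulA.
have c12c3 : s y ⊙ z = z -> s x ⊙ (y ⊙ z) = y ⊙ z -> s (x ⊙ y) ⊙ z = z.
  move=> H1 H2; rewrite Hs.
  transitivity (star y ⊙ (s x ⊙ (y ⊙ z))); first by rewrite !mulA.
  rewrite H2 mulA; exact H1.
rewrite [L (x ⊙ y) z]/L [L y z]/L.
case E1: (s y ⊙ z == z); last first.
  rewrite L_zero; case: eqP => // /c3c1 /eqP; by rewrite E1.
rewrite /L; case E2: (s x ⊙ (y ⊙ z) == y ⊙ z).
  by rewrite (c12c3 (eqP E1) (eqP E2)) eqxx mulA.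
case: eqP => // /c3c2 /eqP; by rewrite E2.
Qed.

Lemma L_one y : L one y = y.
Proof. by rewrite /L /s (star_idem (mul1x one)) !mul1x eqxx. Qed.

Lemma L_iota_l g x y : L (iota g ⊙ x) y = iota g ⊙ L x y.
Proof. by rewrite /L s_iota; case: eqP => _; [rewrite -mulA | rewrite mulx0]. Qed.

Lemma L_zero_l y : L zero y = zero.
Proof. by rewrite /L mul0x; case: eqP. Qed.

Lemma L_sx x : L x (s x) = x.
Proof. by rewrite /L s_idem eqxx /s mulA star1. Qed.

Lemma L_ext x y : (forall z, L x z = L y z) -> x = y.
Proof.
move=> H; have Hx := L_sx x; have Hy := L_sx y.
rewrite H in Hx; rewrite -H in Hy.
have [x0|nx] := eqVneq x zero.
  by move: Hy; rewrite x0 L_zero_l.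
have [y0|ny] := eqVneq y zero.
  by move: Hx; rewrite y0 L_zero_l => Hx; rewrite -Hx eqxx in nx.
move: Hx; rewrite /L; case: eqP => [E1 Hx|_ Hx]; last by rewrite -Hx eqxx in nx.
move: Hy; rewrite /L; case: eqP => [E2 Hy|_ Hy]; last by rewrite -Hy eqxx in ny.
have Ess : s x = s y by rewrite -E1 (idem_comm (s_idem y) (s_idem x)) E2.
by rewrite -Hx Ess /s mulA star1.
Qed.


Definition O := [set Gorbit mul iota x | x in [set x | x != zero]].
Definition orb y := Gorbit mul iota y.
Definition rep (i : 'I_#|O|) : T := odflt zero [pick x in enum_val i].
Definition ent (F : T -> T) (i j : 'I_#|O|) : option G :=
  [pick g : G | F (rep j) == iota g ⊙ rep i].
Definition Mx (F : T -> T) : 'M[option G]_#|O| := \matrix_(i, j) ent F i j.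

Lemma orb_self y : y \in orb y.
Proof. by apply/imsetP; exists 1 => //; rewrite iota1 mul1x. Qed.

Lemma orb_eq w y : w \in orb y -> orb w = orb y.
Proof.
case/imsetP => g _ ->; apply/setP => u; apply/imsetP/imsetP => [[h _ ->]|[h _ ->]].
  by exists (h * g) => //; rewrite iotaMM.
by exists (h * g^-1) => //; rewrite iotaMM mulgKV.
Qed.

Lemma rep_spec i : rep i != zero /\ orb (rep i) = enum_val i.
Proof.
have := enum_valP i; case/imsetP => y; rewrite inE => ny Ev.
rewrite /rep; case: pickP => [w Hw | H] /=; last by move: (orb_self y); rewrite /orb -Ev => Hy; move: (H y); rewrite /= Hy.
move: (Hw); rewrite Ev => Hw'; split; last by apply: orb_eq.
case/imsetP: Hw' => g _ ->; apply/eqP => /iota_zero E; by rewrite E eqxx in ny.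
Qed.

Lemma rep_nz i : rep i != zero. Proof. by case: (rep_spec i). Qed.

Lemma nz_iota g i : iota g ⊙ rep i != zero.
Proof. by apply/eqP => /iota_zero E; have := rep_nz i; rewrite E eqxx. Qed.

Lemma decomp w : w != zero -> exists i g, w = iota g ⊙ rep i.
Proof.
move=> nw.
have Hw : orb w \in O by apply/imsetP; exists w; rewrite ?inE.
set i := enum_rank_in Hw (orb w).
have Ei : enum_val i = orb w := enum_rankK_in Hw Hw.
have : rep i \in orb w by rewrite -Ei -(proj2 (rep_spec i)) orb_self.
case/imsetP => g _ E; exists i, g^-1; by rewrite E iotaK.
Qed.

Lemma rep_eq j1 j2 g : rep j2 = iota g ⊙ rep j1 -> j2 = j1.
Proof.
move=> E; apply: enum_val_inj.
rewrite -(proj2 (rep_spec j1)) -(proj2 (rep_spec j2)); apply: orb_eq.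
by rewrite E; apply/imsetP; exists g.
Qed.

Lemma ent_some F i j g : F (rep j) = iota g ⊙ rep i -> ent F i j = Some g.
Proof.
move=> E; rewrite /ent; case: pickP => [h /eqP Hh|H].
  by congr Some; apply: (iota_freeq (rep_nz i)); rewrite -Hh.
by move: (H g); rewrite E eqxx.
Qed.

Lemma ent_someE F i j g : ent F i j = Some g -> F (rep j) = iota g ⊙ rep i.
Proof. by rewrite /ent; case: pickP => // h /eqP Hh [<-]. Qed.

Lemma Mx_ext F F' : F =1 F' -> Mx F = Mx F'.
Proof. by move=> H; apply/matrixP => i j; rewrite !mxE /ent H. Qed.

Section Good.
Variables F F' : T -> T.
Hypotheses (F0 : F zero = zero) (Fg : forall g y, F (iota g ⊙ y) = iota g ⊙ F y).
Hypotheses (F'0 : F' zero = zero) (F'g : forall g y, F' (iota g ⊙ y) = iota g ⊙ F' y).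

Lemma Mx_inj : Mx F = Mx F' -> forall y, F y = F' y.
Proof.
move=> E.
have Ee : forall i j, ent F i j = ent F' i j.
  by move=> i j; move/matrixP: E => /(_ i j); rewrite !mxE.
have key : forall j, F (rep j) = F' (rep j).
  move=> j; have [z|nz] := eqVneq (F (rep j)) zero.
    have [z'|nz'] := eqVneq (F' (rep j)) zero; first by rewrite z z'.
    case: (decomp nz') => i [g Hg]; have := ent_some Hg; rewrite -Ee => /ent_someE.
    by rewrite Hg.
  case: (decomp nz) => i [g Hg]; have := ent_some Hg; rewrite Ee => /ent_someE.
  by rewrite Hg.
move=> y; have [->|ny] := eqVneq y zero; first by rewrite F0 F'0.
by case: (decomp ny) => j [g ->]; rewrite Fg F'g key.
Qed.

Lemma Mx_comp : Mx (fun y => F (F' y)) = rook_mul (Mx F) (Mx F').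
Proof.
apply/matrixP => i j; rewrite /rook_mul !mxE.
case: pickP => [k|Hn]; rewrite ?mxE.
  case Ea: (ent F i k) => [a|]; case Eb: (ent F' k j) => [b|] //= _.
  apply: ent_some; rewrite (ent_someE Eb) Fg (ent_someE Ea) iotaMM.
  by rewrite abel.
rewrite /ent; case: pickP => // g /eqP Hg.
have nz : F' (rep j) != zero.
  apply/eqP => E; rewrite E F0 in Hg; have := nz_iota g i; by rewrite -Hg eqxx.
case: (decomp nz) => k [b Hb].
have Eb := ent_some Hb.
rewrite Hb Fg in Hg.
have Ha : F (rep k) = iota (b^-1 * g) ⊙ rep i by rewrite -iotaMM -Hg iotaK.
have Ea := ent_some Ha.
by move: (Hn k); rewrite !mxE Ea Eb.
Qed.

Lemma Mx_scale g : Mx (fun y => iota g ⊙ F y) = rook_scale g (Mx F).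
Proof.
apply/matrixP => i j; rewrite /rook_scale !mxE.
case Ea: (ent F i j) => [a|] /=.
  by apply: ent_some; rewrite (ent_someE Ea) iotaMM.
rewrite /ent; case: pickP => // h /eqP Hh.
have : F (rep j) = iota (g^-1 * h) ⊙ rep i by rewrite -iotaMM -Hh iotaK.
by move/ent_some; rewrite Ea.
Qed.

Lemma Mx_rook : (forall y1 y2, F y1 = F y2 -> F y1 != zero -> y1 = y2) -> is_rook (Mx F).
Proof.
move=> Finj.
apply/andP; split; apply/forallP => i; apply/forallP => j1; apply/forallP => j2;
  apply/implyP; rewrite !mxE.
  case Ea: (ent F i j1) => [a|] //; case Eb: (ent F i j2) => [b|] // _.
  have Ha := ent_someE Ea; have Hb := ent_someE Eb.
  have H : F (iota (b * a^-1) ⊙ rep j1) = F (rep j2) by rewrite Fg Ha Hb iotaMM mulgKV.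
  have := Finj _ _ H; rewrite H Hb => /(_ (nz_iota b i)) E.
  by apply/eqP; rewrite (rep_eq (esym E)).
case Ea: (ent F j1 i) => [a|] //; case Eb: (ent F j2 i) => [b|] // _.
have Ha := ent_someE Ea; have Hb := ent_someE Eb.
have E : rep j1 = iota (a^-1 * b) ⊙ rep j2 by rewrite -iotaMM -Hb Ha iotaK.
by apply/eqP; rewrite (rep_eq E).
Qed.

End Good.

Lemma Mx_id : Mx (fun y => y) = rook_one G #|O|.
Proof.
apply/matrixP => i j; rewrite /rook_one !mxE; case: eqP => [->|ne].
  by apply: ent_some; rewrite iota1 mul1x.
rewrite /ent; case: pickP => // g /eqP Hg.
by exfalso; apply: ne; rewrite (rep_eq Hg).
Qed.

Lemma main_sec : exists phi : T -> 'M[option G]_#|O|,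
    (forall x, is_rook (phi x)) /\
    injective phi /\
    phi one = rook_one G #|O| /\
    (forall x y, phi (x ⊙ y) = rook_mul (phi x) (phi y)) /\
    (forall x y, is_star_inv mul x y ->
                 is_star_inv (@rook_mul G #|O|) (phi x) (phi y)) /\
    (forall (g : G) x, phi (iota g ⊙ x) = rook_scale g (phi x)).
Proof.
exists (fun x => Mx (L x)).
have hom : forall x y, Mx (L (x ⊙ y)) = rook_mul (Mx (L x)) (Mx (L y)).
  move=> x y; rewrite -Mx_comp; first [exact: L_zero | exact: L_iota | (apply: Mx_ext => z; exact: L_mul)].
split; first by move=> x; apply: Mx_rook; first [exact: L_zero|exact: L_iota|exact: L_inj].
split.
  move=> x y E; apply: L_ext; apply: Mx_inj E; first [exact: L_zero | exact: L_iota].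
split; first by rewrite -Mx_id; apply: Mx_ext; exact: L_one.
split; first exact: hom.
split; first by move=> x y [H1 H2]; split; rewrite -hom -hom ?H1 ?H2.
by move=> g x; rewrite -Mx_scale; apply: Mx_ext => y; exact: L_iota_l.
Qed.

End Inv.

Theorem mainTheorem6 (G : finGroupType) (T : finType)
  (mul : T -> T -> T) (one zero : T) (iota : G -> T) (n : nat) :
  abelian [set: G] ->
  is_Ghat_linear_monoid mul one zero iota ->
  is_inverse_monoid mul ->
  n = Ghat_dim mul zero iota ->
  exists phi : T -> 'M[option G]_n,
    (forall x, is_rook (phi x)) /\
    injective phi /\
    phi one = rook_one G n /\
    (forall x y, phi (mul x y) = rook_mul (phi x) (phi y)) /\
    (forall x y, is_star_inv mul x y ->
                 is_star_inv (@rook_mul G n) (phi x) (phi y)) /\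
    (forall (g : G) x, phi (mul (iota g) x) = rook_scale g (phi x)).
Proof.
move=> Hab [mA [m1x [mx1 [m0 [_ [i1 [iM [iC fr]]]]]]]] Hinv ->.
have abel : forall g h : G, g * h = h * g.
  by move=> g h; apply: (centsP Hab); rewrite inE.
have mA' : forall x y z, mul x (mul y z) = mul (mul x y) z by move=> x y z; rewrite mA.
exact (@main_sec G T mul one zero iota mA' m1x (fun x => proj1 (m0 x)) (fun x => proj2 (m0 x)) i1 iM iC fr abel Hinv).
Qed.
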